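(* We have $K_{{\cal Z}_1}({\cal R}^1)=R_{q-1}$, so ${\cal R}^1$ is not exceptional for $K_{{\cal Z}_1}$. In fact for $z_0=\pi_1(0,\lambda,\nu, v)\in {\cal R}^1$, $$K_{{\cal Z}_1}(z)=B\begin{pmatrix}0&0\\ 0& I_{q-1}(v')\end{pmatrix} A$$ where $I_{q-1}$ denotes matrix inversion on ${\cal M}_{q-1}$, and $$v'=\left( {-v_{j,k}\over \lambda_j^2\nu_k^2}\right)_{2\le j,k\le q}, \quad A=\begin{pmatrix} 1 & 0& \cdots &0\\ -\lambda_2^{-1} & 1 & & \\ \vdots & & \ddots & \\ -\lambda_q^{-1} & & & 1\end{pmatrix}, \quad B = \begin{pmatrix} 1 & -\nu_2^{-1}& \cdots &-\nu_q^{-1}\\ 0& 1 & & \\ \vdots & & \ddots & \\ 0 & & & 1\end{pmatrix}.$$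
   Context: ${\cal M}_q$ is the space of complex $q\times q$ matrices, ${\bf P}({\cal M}_q)$ its projectivization. $I(x)=x^{-1}$ is matrix inversion, $J(x)=(1/x_{i,j})$ is entrywise reciprocal, and $K=I\circ J$, a birational map of ${\bf P}({\cal M}_q)$. $R_j$ denotes the set of matrices of rank $\le j$; $R_1$ is the smooth submanifold of rank-one matrices $\lambda\otimes\nu=(\lambda_i\nu_j)$. $\pi_1:{\cal Z}_1\to{\bf P}({\cal M}_q)$ is the blowup along $R_1$, with exceptional hypersurface ${\cal R}^1$, and $K_{{\cal Z}_1}=\pi_1^{-1}\circ K\circ\pi_1$ is the induced birational map. A hypersurface is exceptional if its strict transform has codimension $\ge 2$. Local coordinates: $U_1=\{z\in{\bf C}^q: z_1=1\}$; $V_{k,\ell}$ ($2\le k,\ell\le q$) is the set of matrices whose first row and first column vanish and whose $(k,\ell)$ entry equals $1$; the chart is $\pi_1:{\bf C}\times U_1\times U_1\times V_{k,\ell}\to\{x: x_{1,1}=1\}$, $\pi_1(s,\lambda,\nu,v)=\lambda\otimes\nu+sv$, in which ${\cal R}^1=\{s=0\}$ (after permuting rows/columns one may assume the $(1,1)$ entry is nonzero). *)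

(* Defs.v *)
From HB Require Import structures.
From mathcomp Require Import all_boot all_order all_algebra.
From mathcomp Require Import complex reals.
Set Implicit Arguments. Unset Strict Implicit. Unset Printing Implicit Defensive.
Import Order.TTheory GRing.Theory Num.Theory.
Local Open Scope ring_scope.

Section Defs.
Variable R : realType.
Local Notation C := (R[i]).

Definition Jmx m n (x : 'M[C]_(m, n)) : 'M[C]_(m, n) := \matrix_(i, j) (x i j)^-1.

Definition Kmap n (x : 'M[C]_n) : 'M[C]_n := invmx (Jmx x).

(* Matrices q x q are indexed as 'M_(1 + n) with q = n + 1; index 0 is the
   paper's index 1, and the block of size n carries indices 2..q.
   lam, nu : 'cV_n are (lambda_2..lambda_q), (nu_2..nu_q); lambda_1 = nu_1 = 1
   (points of U_1).  v in V_{k,l} is block_mx 0 0 0 w with w k l = 1. *)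
Definition vfull n (lam : 'cV[C]_n) : 'cV[C]_(1 + n) := col_mx 1 lam.

Definition Vmx n (w : 'M[C]_n) : 'M[C]_(1 + n) := block_mx 0 0 0 w.

Definition pi1 n (s : C) (lam nu : 'cV[C]_n) (w : 'M[C]_n) : 'M[C]_(1 + n) :=
  vfull lam *m (vfull nu)^T + s *: Vmx w.

Definition vprime n (lam nu : 'cV[C]_n) (w : 'M[C]_n) : 'M[C]_n :=
  \matrix_(j, k) (- w j k / (lam j 0 ^+ 2 * nu k 0 ^+ 2)).

Definition Amx n (lam : 'cV[C]_n) : 'M[C]_(1 + n) :=
  block_mx 1 0 (- map_mx GRing.inv lam) 1.

Definition Bmx n (nu : 'cV[C]_n) : 'M[C]_(1 + n) :=
  block_mx 1 (- (map_mx GRing.inv nu)^T) 0 1.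

Definition KZ1_formula n (lam nu : 'cV[C]_n) (w : 'M[C]_n) : 'M[C]_(1 + n) :=
  Bmx nu *m block_mx (0 : 'M_1) 0 0 (invmx (vprime lam nu w)) *m Amx lam.

Definition mx_lim m n (X : C -> 'M[C]_(m, n)) (M : 'M[C]_(m, n)) : Prop :=
  forall e : C, 0 < e -> exists2 d : C, 0 < d &
    forall s : C, s != 0 -> `|s| < d -> forall i j, `|X s i j - M i j| < e.

(* projective convergence [X(s)] -> [M] in P(M): some rescaling converges to M
   (meaningful when M != 0) *)
Definition proj_lim m n (X : C -> 'M[C]_(m, n)) (M : 'M[C]_(m, n)) : Prop :=
  M != 0 /\ exists c : C -> C, mx_lim (fun s => c s *: X s) M.

Definition K_defined_near0 n (lam nu : 'cV[C]_n) (w : 'M[C]_n) : Prop :=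
  exists2 d : C, 0 < d & forall s : C, s != 0 -> `|s| < d ->
    (forall i j, pi1 s lam nu w i j != 0) /\ Jmx (pi1 s lam nu w) \in unitmx.

(* K_{Z_1}(pi_1(0, lam, nu, v)) = [M] : the value of the induced birational map
   on the exceptional divisor, i.e. the limit of K(pi_1(s,lam,nu,v)) as s -> 0 *)
Definition KZ1_value n (lam nu : 'cV[C]_n) (w : 'M[C]_n) (M : 'M[C]_(1 + n)) : Prop :=
  K_defined_near0 lam nu w /\ proj_lim (fun s => Kmap (pi1 s lam nu w)) M.

(* generic point of R^1 in the chart C x U_1 x U_1 x V_{k,l} (with s = 0) *)
Definition generic_R1_point n (lam nu : 'cV[C]_n) (w : 'M[C]_n) : Prop :=
  (exists k l, w k l = 1) /\ (forall j, lam j 0 != 0) /\ (forall j, nu j 0 != 0)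
  /\ vprime lam nu w \in unitmx.

End Defs.

(* Main.v *)
Require Import Defs.
From HB Require Import structures.
From mathcomp Require Import all_boot all_order all_algebra.
From mathcomp Require Import complex reals.
From mathcomp.algebra_tactics Require Import ring.
Import Order.TTheory GRing.Theory Num.Theory.
Local Open Scope ring_scope.
Set Implicit Arguments. Unset Strict Implicit. Unset Printing Implicit Defensive.

Section Lim.
Variable K : numFieldType.

Definition near0 (P : K -> Prop) :=
  exists2 d : K, 0 < d & forall s, s != 0 -> `|s| < d -> P s.

Lemma near0T (P : K -> Prop) : (forall s, P s) -> near0 P.
Proof. by move=> h; exists 1 => // s _ _; apply: h. Qed.

Lemma near0_impl (P Q : K -> Prop) : (forall s, P s -> Q s) -> near0 P -> near0 Q.
Proof. by move=> h [d d0 hd]; exists d => // s s0 sd; apply/h/hd. Qed.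

Lemma near0_implnz (P Q : K -> Prop) :
  (forall s, s != 0 -> P s -> Q s) -> near0 P -> near0 Q.
Proof. by move=> h [d d0 hd]; exists d => // s s0 sd; apply/h/hd. Qed.

Lemma near0_and (P Q : K -> Prop) : near0 P -> near0 Q -> near0 (fun s => P s /\ Q s).
Proof.
move=> [d1 d10 h1] [d2 d20 h2].
case/orP: (real_leVge (gtr0_real d10) (gtr0_real d20)) => hd.
  exists d1 => // s s0 sd; split; [exact: h1|apply: h2 => //; exact: lt_le_trans hd].
exists d2 => // s s0 sd; split; [apply: h1 => //; exact: lt_le_trans hd|exact: h2].
Qed.

Lemma near0_seq (I : eqType) (r : seq I) (P : I -> K -> Prop) :
  (forall i, near0 (P i)) -> near0 (fun s => forall i, i \in r -> P i s).
Proof.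
move=> h; elim: r => [|a r ih]; first by apply: near0T.
apply: near0_impl (near0_and (h a) ih) => s [ha hr] i; rewrite inE => /orP[/eqP->//|].
exact: hr.
Qed.

Lemma near0_all (I : finType) (P : I -> K -> Prop) :
  (forall i, near0 (P i)) -> near0 (fun s => forall i, P i s).
Proof.
move=> h; apply: near0_impl (near0_seq (enum I) h) => s hs i; apply: hs.
by rewrite mem_enum.
Qed.

Definition lim0 (f : K -> K) (L : K) :=
  forall e : K, 0 < e -> near0 (fun s => `|f s - L| < e).

Lemma lim0_eq f g L : (forall s, f s = g s) -> lim0 f L -> lim0 g L.
Proof. by move=> h hf e e0; apply: near0_impl (hf e e0) => s; rewrite h. Qed.

Lemma lim0_near f g L : near0 (fun s => f s = g s) -> lim0 f L -> lim0 g L.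
Proof.
move=> h hf e e0; apply: near0_impl (near0_and h (hf e e0)) => s [-> //].
Qed.

Lemma lim0_cst c : lim0 (fun _ => c) c.
Proof. by move=> e e0; apply: near0T => s; rewrite subrr normr0. Qed.

Lemma lim0_id : lim0 id 0.
Proof. by move=> e e0; exists e => // s _; rewrite subr0. Qed.

Lemma lim0_add f g L M : lim0 f L -> lim0 g M -> lim0 (fun s => f s + g s) (L + M).
Proof.
move=> hf hg e e0; have e2 : 0 < e / 2%:R by rewrite divr_gt0 ?ltr0n.
apply: near0_impl (near0_and (hf _ e2) (hg _ e2)) => s [h1 h2].
rewrite opprD addrACA (splitr e); apply: le_lt_trans (ler_normD _ _) _.
exact: ltrD.
Qed.

Lemma lim0_opp f L : lim0 f L -> lim0 (fun s => - f s) (- L).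
Proof. by move=> hf e e0; apply: near0_impl (hf e e0) => s; rewrite -opprD normrN. Qed.

Lemma lim0_mul f g L M : lim0 f L -> lim0 g M -> lim0 (fun s => f s * g s) (L * M).
Proof.
move=> hf hg e e0.
have L1 : 0 < `|L| + 1 by rewrite ltr_wpDl.
have M1 : 0 < `|M| + 1 by rewrite ltr_wpDl.
have c1 : 0 < e / (2%:R * (`|L| + 1)) by rewrite divr_gt0 // mulr_gt0 ?ltr0n.
have c2 : 0 < e / (2%:R * (`|M| + 1)) by rewrite divr_gt0 // mulr_gt0 ?ltr0n.
apply: near0_impl (near0_and (near0_and (hf _ ltr01) (hf _ c2)) (hg _ c1)).
move=> s [[h1 h2] h3].
have -> : f s * g s - L * M = f s * (g s - M) + (f s - L) * M by ring.
apply: le_lt_trans (ler_normD _ _) _; rewrite !normrM (splitr e).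
have hfs : `|f s| <= `|L| + 1.
  have -> : f s = L + (f s - L) by ring.
  by apply: le_trans (ler_normD _ _) _; rewrite lerD2l ltW.
apply: ltrD.
  apply: (@le_lt_trans _ _ ((`|L| + 1) * `|g s - M|)); first by rewrite ler_wpM2r.
  rewrite -ltr_pdivlMl //.
  have -> : (`|L| + 1)^-1 * (e / 2%:R) = e / (2%:R * (`|L| + 1)).
    by field; rewrite ?gt_eqF.
  exact: h3.
apply: (@le_lt_trans _ _ (`|f s - L| * (`|M| + 1))); first by rewrite ler_wpM2l // lerDl.
rewrite -ltr_pdivlMr //.
have -> : e / 2%:R / (`|M| + 1) = e / (2%:R * (`|M| + 1)).
  by field; rewrite ?gt_eqF.
exact: h2.
Qed.

Lemma lim0_inv f L : L != 0 -> lim0 f L -> lim0 (fun s => (f s)^-1) L^-1.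
Proof.
move=> L0 hf e e0.
have nL : 0 < `|L| by rewrite normr_gt0.
have c1 : 0 < `|L| / 2%:R by rewrite divr_gt0 // ltr0n.
have c2 : 0 < e * `|L| * (`|L| / 2%:R) by apply: mulr_gt0 => //; apply: mulr_gt0.
apply: near0_impl (near0_and (hf _ c1) (hf _ c2)) => s [h1 h2].
have hfs : `|L| / 2%:R < `|f s|.
  have h : `|L| <= `|f s| + `|L - f s|.
    by have := ler_normD (f s) (L - f s); rewrite [f s + _]addrC subrK.
  rewrite distrC in h.
  have : `|L| < `|f s| + `|L| / 2%:R by apply: le_lt_trans h _; rewrite ltrD2l.
  by rewrite {1}(splitr `|L|) ltrD2r.
have fs0 : f s != 0 by rewrite -normr_gt0; apply: lt_trans hfs.
have -> : (f s)^-1 - L^-1 = (L - f s) / (f s * L) by field; rewrite L0 fs0.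
have nfs : 0 < `|f s| by rewrite normr_gt0.
rewrite normrM normfV normrM ltr_pdivrMr ?mulr_gt0 // distrC.
apply: lt_trans h2 _; rewrite -mulrA ltr_pM2l // mulrC ltr_pM2r //.
Qed.

Lemma lim0_ne0 f L : L != 0 -> lim0 f L -> near0 (fun s => f s != 0).
Proof.
move=> L0 hf; apply: near0_impl (hf `|L| _); last by rewrite normr_gt0.
by move=> s h; apply/eqP => fs0; move: h; rewrite fs0 sub0r normrN ltxx.
Qed.

Lemma lim0_sumseq (I : Type) (r : seq I) (F : I -> K -> K) (L : I -> K) :
  (forall i, lim0 (F i) (L i)) ->
  lim0 (fun s => \sum_(i <- r) F i s) (\sum_(i <- r) L i).
Proof.
move=> h; elim: r => [|a r ih].
  by apply: (lim0_eq (f := fun _ => 0)) => [s|]; rewrite ?big_nil //; apply: lim0_cst.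
rewrite big_cons; apply: lim0_eq (lim0_add (h a) ih) => s; by rewrite big_cons.
Qed.

Lemma lim0_prodseq (I : Type) (r : seq I) (F : I -> K -> K) (L : I -> K) :
  (forall i, lim0 (F i) (L i)) ->
  lim0 (fun s => \prod_(i <- r) F i s) (\prod_(i <- r) L i).
Proof.
move=> h; elim: r => [|a r ih].
  by apply: (lim0_eq (f := fun _ => 1)) => [s|]; rewrite ?big_nil //; apply: lim0_cst.
rewrite big_cons; apply: lim0_eq (lim0_mul (h a) ih) => s; by rewrite big_cons.
Qed.

Lemma lim0_sum (I : finType) (F : I -> K -> K) (L : I -> K) :
  (forall i, lim0 (F i) (L i)) ->
  lim0 (fun s => \sum_i F i s) (\sum_i L i).
Proof. exact: lim0_sumseq. Qed.

Lemma lim0_prod (I : finType) (F : I -> K -> K) (L : I -> K) :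
  (forall i, lim0 (F i) (L i)) ->
  lim0 (fun s => \prod_i F i s) (\prod_i L i).
Proof. exact: lim0_prodseq. Qed.

End Lim.


Section LimMx.
Variable K : numFieldType.

Definition limmx m n (F : K -> 'M[K]_(m, n)) (L : 'M[K]_(m, n)) :=
  forall i j, lim0 (fun s => F s i j) (L i j).

Lemma limmx_cst m n (L : 'M[K]_(m, n)) : limmx (fun _ => L) L.
Proof. by move=> i j; apply: lim0_cst. Qed.

Lemma limmx_near m n (F G : K -> 'M[K]_(m, n)) L :
  near0 (fun s => F s = G s) -> limmx F L -> limmx G L.
Proof.
by move=> h hF i j; apply: lim0_near (hF i j); apply: near0_impl h => s ->.
Qed.

Lemma limmx_mul m n p (F : K -> 'M[K]_(m, n)) (G : K -> 'M[K]_(n, p)) L M :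
  limmx F L -> limmx G M -> limmx (fun s => F s *m G s) (L *m M).
Proof.
move=> hF hG i j; rewrite mxE.
apply: lim0_eq (lim0_sum (fun k => lim0_mul (hF i k) (hG k j))) => s.
by rewrite mxE.
Qed.

Lemma limmx_scale m n (F : K -> 'M[K]_(m, n)) L c :
  limmx F L -> limmx (fun s => c *: F s) (c *: L).
Proof.
move=> hF i j; rewrite mxE.
by apply: lim0_eq (lim0_mul (lim0_cst c) (hF i j)) => s; rewrite mxE.
Qed.

Lemma limmx_det m (F : K -> 'M[K]_m) L :
  limmx F L -> lim0 (fun s => \det (F s)) (\det L).
Proof.
move=> hF; apply: lim0_sum => sg; apply: lim0_mul; first exact: lim0_cst.
by apply: lim0_prod => i; apply: hF.
Qed.

Lemma limmx_adj m (F : K -> 'M[K]_m) L :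
  limmx F L -> limmx (fun s => \adj (F s)) (\adj L).
Proof.
move=> hF i j; rewrite mxE.
apply: lim0_eq; first by move=> s; rewrite [RHS]mxE.
apply: lim0_mul; first exact: lim0_cst.
apply: (limmx_det (F := fun s => row' j (col' i (F s)))) => a b.
by rewrite !mxE; apply: lim0_eq (hF _ _) => s; rewrite !mxE.
Qed.

Lemma limmx_inv m (F : K -> 'M[K]_m) L :
  \det L != 0 -> limmx F L -> limmx (fun s => invmx (F s)) (invmx L).
Proof.
move=> dL hF.
have hd := limmx_det hF.
have hne := lim0_ne0 dL hd.
have e : near0 (fun s => (\det (F s))^-1 *: \adj (F s) = invmx (F s)).
  by apply: near0_impl hne => s h; rewrite /invmx unitmxE unitfE h.
apply: limmx_near e _.
have -> : invmx L = (\det L)^-1 *: \adj L by rewrite /invmx unitmxE unitfE dL.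
move=> i j; rewrite mxE.
apply: lim0_eq; first by move=> s; rewrite [RHS]mxE.
exact: lim0_mul (lim0_inv dL hd) (limmx_adj hF i j).
Qed.

Lemma limmx_block m1 m2 n1 n2 (F1 : K -> 'M[K]_(m1, n1)) (F2 : K -> 'M[K]_(m1, n2))
  (F3 : K -> 'M[K]_(m2, n1)) (F4 : K -> 'M[K]_(m2, n2)) L1 L2 L3 L4 :
  limmx F1 L1 -> limmx F2 L2 -> limmx F3 L3 -> limmx F4 L4 ->
  limmx (fun s => block_mx (F1 s) (F2 s) (F3 s) (F4 s)) (block_mx L1 L2 L3 L4).
Proof.
move=> h1 h2 h3 h4 i j; rewrite -(splitK i) -(splitK j).
case: (split i) => i'; case: (split j) => j' /=.
- by rewrite block_mxEul; apply: lim0_eq (h1 i' j') => s; rewrite block_mxEul.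
- by rewrite block_mxEur; apply: lim0_eq (h2 i' j') => s; rewrite block_mxEur.
- by rewrite block_mxEdl; apply: lim0_eq (h3 i' j') => s; rewrite block_mxEdl.
by rewrite block_mxEdr; apply: lim0_eq (h4 i' j') => s; rewrite block_mxEdr.
Qed.

Lemma limmx_scalar m : limmx (fun s : K => (s%:M : 'M[K]_m)) 0.
Proof.
move=> i j; rewrite mxE; apply: lim0_eq; first by move=> s; rewrite [RHS]mxE.
case: (i == j) => /=; last exact: lim0_cst.
exact: lim0_id.
Qed.

Lemma limmx_unif m n (F : K -> 'M[K]_(m, n)) L :
  limmx F L -> forall e, 0 < e ->
  near0 (fun s => forall i j, `|F s i j - L i j| < e).
Proof.
move=> hF e e0; apply: near0_all => i; apply: near0_all => j; exact: hF.
Qed.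

End LimMx.


Section Alg.
Variable R : realType.
Local Notation C := (R[i]).
Variable n : nat.
Implicit Types (lam nu : 'cV[C]_n) (w : 'M[C]_n) (s : C).

Definition Hp lam nu w s : 'M[C]_n :=
  \matrix_(i, j) (- w i j / (lam i 0 * nu j 0 * (lam i 0 * nu j 0 + s * w i j))).

Lemma pi1_block s lam nu w :
  pi1 s lam nu w = block_mx 1 nu^T lam (lam *m nu^T + s *: w).
Proof.
rewrite /pi1 /vfull /Vmx tr_col_mx mul_col_row scale_block_mx add_block_mx.
by rewrite !scaler0 !addr0 trmx1 !mul1mx mulmx1 ?add0r.
Qed.

Lemma Jmx_block m1 m2 n1 n2 (P : 'M[C]_(m1, n1)) (Q : 'M[C]_(m1, n2))
  (S : 'M[C]_(m2, n1)) (T : 'M[C]_(m2, n2)) :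
  Jmx (block_mx P Q S T) = block_mx (Jmx P) (Jmx Q) (Jmx S) (Jmx T).
Proof.
apply/matrixP => i j; rewrite -(splitK i) -(splitK j).
case: (split i) => i'; case: (split j) => j'; rewrite [LHS]mxE /=.
- by rewrite !block_mxEul mxE.
- by rewrite !block_mxEur mxE.
- by rewrite !block_mxEdl mxE.
by rewrite !block_mxEdr mxE.
Qed.

Lemma AJB s lam nu w :
  (forall j, lam j 0 != 0) -> (forall j, nu j 0 != 0) ->
  (forall i j, lam i 0 * nu j 0 + s * w i j != 0) ->
  Amx lam *m Jmx (pi1 s lam nu w) *m Bmx nu = block_mx 1 0 0 (s *: Hp lam nu w s).
Proof.
move=> hl hn hw.
have J1 : Jmx (1 : 'M[C]_1) = 1.
  by apply/matrixP => i j; rewrite !mxE !ord1 eqxx invr1.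
have Jt : Jmx nu^T = (map_mx GRing.inv nu)^T.
  by apply/matrixP => i j; rewrite !mxE.
have Jl : Jmx lam = map_mx GRing.inv lam.
  by apply/matrixP => i j; rewrite !mxE.
rewrite pi1_block Jmx_block J1 Jt Jl /Amx /Bmx !mulmx_block.
rewrite !mul1mx !mul0mx !mulmx0 !mulmx1 ?addr0 ?add0r addNr mul0mx add0r.
rewrite [1 *m _]mul1mx addNr; congr block_mx.
apply/matrixP => i j; rewrite !mxE big_ord1 !mxE big_ord1 !mxE.
have := hw i j; have := hl i; have := hn j => h1 h2 h3.
by field; rewrite h1 h2 h3.
Qed.

End Alg.


Section P1.
Variable R : realType.
Local Notation C := (R[i]).
Variable n : nat.
Implicit Types (lam nu : 'cV[C]_n) (w : 'M[C]_n) (s : C).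

Lemma Amx_unit lam : Amx lam \in unitmx.
Proof. by rewrite unitmxE /Amx det_lblock !det1 mulr1 unitr1. Qed.

Lemma Bmx_unit nu : Bmx nu \in unitmx.
Proof. by rewrite unitmxE /Bmx det_ublock !det1 mulr1 unitr1. Qed.

Lemma rank_unit_both m (B M A : 'M[C]_m) :
  B \in unitmx -> A \in unitmx -> \rank (B *m M *m A) = \rank M.
Proof.
move=> uB uA; rewrite mxrankMfree ?row_free_unit //.
by rewrite -mxrank_tr trmx_mul mxrankMfree ?row_free_unit ?unitmx_tr // mxrank_tr.
Qed.

Lemma vprime_Hp0 lam nu w :
  (forall j, lam j 0 != 0) -> (forall j, nu j 0 != 0) ->
  vprime lam nu w = Hp lam nu w 0.
Proof.
move=> hl hn; apply/matrixP => i j; rewrite !mxE.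
have := hl i; have := hn j => h1 h2.
by field; rewrite h1 h2.
Qed.

Lemma lim_Hp lam nu w :
  (forall j, lam j 0 != 0) -> (forall j, nu j 0 != 0) ->
  limmx (Hp lam nu w) (vprime lam nu w).
Proof.
move=> hl hn; rewrite vprime_Hp0 // => i j; rewrite [X in lim0 _ X]mxE.
have h0 : lam i 0 * nu j 0 * (lam i 0 * nu j 0 + 0 * w i j) != 0.
  by rewrite mul0r addr0 !mulf_neq0.
apply: lim0_eq; last first.
  apply: lim0_mul (lim0_cst _) (lim0_inv h0 _).
  apply: lim0_mul (lim0_cst _) (lim0_add (lim0_cst _) (lim0_mul (@lim0_id _) (lim0_cst _))).
by move=> s; rewrite mxE.
Qed.

Lemma vfull_ne0 lam : (forall j, lam j 0 != 0) -> forall i, vfull lam i 0 != 0.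
Proof.
move=> hl i; rewrite /vfull -(splitK i); case: (split i) => i' /=.
  by rewrite col_mxEu (ord1 i') mxE /= oner_neq0.
by rewrite col_mxEd.
Qed.

Lemma pi1E s lam nu w i j :
  pi1 s lam nu w i j = vfull lam i 0 * vfull nu j 0 + s * Vmx w i j.
Proof.
rewrite /pi1 [LHS]mxE [X in X + _]mxE [X in _ + X]mxE big_ord1.
by rewrite [(vfull nu)^T _ _]mxE.
Qed.

Lemma lim_pi1 lam nu w i j :
  lim0 (fun s => pi1 s lam nu w i j) (vfull lam i 0 * vfull nu j 0).
Proof.
have h := lim0_add (lim0_cst (vfull lam i 0 * vfull nu j 0))
            (lim0_mul (@lim0_id _) (lim0_cst (Vmx w i j))).
rewrite mul0r addr0 in h.
by apply: lim0_eq h => s; rewrite pi1E.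
Qed.

End P1.


Section P2.
Variable R : realType.
Local Notation C := (R[i]).
Variable n : nat.
Implicit Types (lam nu : 'cV[C]_n) (w : 'M[C]_n) (s : C).

Lemma part1 lam nu w : generic_R1_point lam nu w ->
  K_defined_near0 lam nu w /\
  limmx (fun s => s *: Kmap (pi1 s lam nu w)) (KZ1_formula lam nu w).
Proof.
case=> _ [hl [hn hv]].
have hH : limmx (Hp lam nu w) (vprime lam nu w) by apply: lim_Hp.
have dv : \det (vprime lam nu w) != 0 by rewrite -unitfE -unitmxE.
have nD := lim0_ne0 dv (limmx_det hH).
have nP : near0 (fun s => forall i j, pi1 s lam nu w i j != 0).
  apply: near0_all => i; apply: near0_all => j.
  apply: lim0_ne0 (lim_pi1 lam nu w i j); by rewrite mulf_neq0 ?vfull_ne0.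
have nW : near0 (fun s => forall i j, lam i 0 * nu j 0 + s * w i j != 0).
  apply: near0_all => i; apply: near0_all => j.
  have h := lim0_add (lim0_cst (lam i 0 * nu j 0))
              (lim0_mul (@lim0_id _) (lim0_cst (w i j))).
  rewrite mul0r addr0 in h.
  by apply: lim0_ne0 h; rewrite mulf_neq0.
have key : near0 (fun s => ((forall i j, pi1 s lam nu w i j != 0) /\
     Jmx (pi1 s lam nu w) \in unitmx) /\
     s *: Kmap (pi1 s lam nu w) =
     Bmx nu *m block_mx (s%:M : 'M[C]_1) 0 0 (invmx (Hp lam nu w s)) *m Amx lam).
  apply: near0_implnz (near0_and nP (near0_and nW nD)) => s s0 [hP [hW hd]].
  set J := Jmx (pi1 s lam nu w).
  have AJB' : Amx lam *m J *m Bmx nu = block_mx 1 0 0 (s *: Hp lam nu w s) by apply: AJB.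
  have uH : Hp lam nu w s \in unitmx by rewrite unitmxE unitfE.
  have uJ : J \in unitmx.
    have : \det (Amx lam *m J *m Bmx nu) != 0.
      by rewrite AJB' det_lblock det1 mul1r detZ mulf_neq0 // expf_neq0.
    rewrite unitmxE unitfE !det_mulmx !mulf_eq0 !negb_or.
    by case/andP => /andP[_ ->].
  split; first by split.
  have AJ : Amx lam *m J = block_mx 1 0 0 (s *: Hp lam nu w s) *m invmx (Bmx nu).
    by rewrite -AJB' mulmxK // Bmx_unit.
  have MD : block_mx (s%:M : 'M[C]_1) 0 0 (invmx (Hp lam nu w s)) *m
            block_mx 1 0 0 (s *: Hp lam nu w s) = s%:M.
    rewrite mulmx_block !mulmx0 !mul0mx !addr0 ?add0r -scalemxAr mulVmx //.
    by rewrite scalemx1 [s%:M *m _]mulmx1 -scalar_mx_block.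
  have E : Bmx nu *m block_mx (s%:M : 'M[C]_1) 0 0 (invmx (Hp lam nu w s)) *m Amx lam *m J = s%:M.
    rewrite -mulmxA AJ mulmxA -(mulmxA (Bmx nu)) MD mul_mx_scalar.
    by rewrite -scalemxAl mulmxV ?Bmx_unit // scalemx1.
  by rewrite /Kmap -/J -[RHS](mulmxK uJ) E mul_scalar_mx.
split.
  by apply: near0_impl key => s [h _]; exact: h.
apply: (@limmx_near _ _ _
  (fun s => Bmx nu *m block_mx (s%:M : 'M[C]_1) 0 0 (invmx (Hp lam nu w s)) *m Amx lam)).
  by apply: near0_impl key => s [_ ->].
rewrite /KZ1_formula.
apply: limmx_mul (limmx_mul (limmx_cst _) _) (limmx_cst _).
exact: limmx_block (@limmx_scalar _ _) (limmx_cst _) (limmx_cst _) (limmx_inv dv hH).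
Qed.

Lemma formula_rank lam nu w : generic_R1_point lam nu w ->
  \rank (KZ1_formula lam nu w) = n.
Proof.
case=> _ [hl [hn hv]].
rewrite /KZ1_formula rank_unit_both ?Amx_unit ?Bmx_unit //.
by rewrite rank_diag_block_mx mxrank0 add0n mxrank_unit // unitmx_inv.
Qed.

End P2.


Section P3.
Variable R : realType.
Local Notation C := (R[i]).

Lemma col1_eq0 p (P : 'M[C]_(p, 1)) (z : 'M[C]_1) :
  z 0 0 != 0 -> P *m z = 0 -> P = 0.
Proof.
move=> hz h; apply/matrixP => i j; rewrite (ord1 j).
have := congr1 (fun Z : 'M[C]_(p, 1) => Z i 0) h; rewrite !mxE big_ord1 => /eqP.
by rewrite mulf_eq0 (negbTE hz) orbF => /eqP.
Qed.

Lemma row1_eq0 p (z : 'M[C]_1) (P : 'M[C]_(1, p)) :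
  z 0 0 != 0 -> z *m P = 0 -> P = 0.
Proof.
move=> hz h; apply/matrixP => i j; rewrite (ord1 i).
have := congr1 (fun Z : 'M[C]_(1, p) => Z 0 j) h; rewrite !mxE big_ord1 => /eqP.
by rewrite mulf_eq0 (negbTE hz) /= => /eqP.
Qed.

Variable n : nat.

Lemma part2 (hn : (1 <= n)%N) (M : 'M[C]_(1 + n)) :
  \rank M = n ->
  (exists2 x : 'cV[C]_(1 + n), (forall j, x j 0 != 0) & M *m x = 0) ->
  (exists2 y : 'rV[C]_(1 + n), (forall j, y 0 j != 0) & y *m M = 0) ->
  exists (lam nu : 'cV[C]_n) (w : 'M[C]_n),
    generic_R1_point lam nu w /\ KZ1_value lam nu w M.
Proof.
move=> hr [x hx hMx] [y hy hyM].
set x0 := x (lshift n 0) 0; set y0 := y 0 (lshift n 0).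
have x00 : x0 != 0 by apply: hx.
have y00 : y0 != 0 by apply: hy.
pose lam : 'cV[C]_n := \col_j (x0 / x (rshift 1 j) 0).
pose nu : 'cV[C]_n := \col_j (y0 / y 0 (rshift 1 j)).
have hl : forall j, lam j 0 != 0 by move=> j; rewrite mxE mulf_neq0 // invr_eq0.
have hnu : forall j, nu j 0 != 0 by move=> j; rewrite mxE mulf_neq0 // invr_eq0.
have uA := Amx_unit lam; have uB := Bmx_unit nu.
have Ax : Amx lam *m x = col_mx (usubmx x) 0.
  rewrite -[x in LHS]vsubmxK /Amx mul_block_col.
  rewrite [1 *m _]mul1mx [1 *m _]mul1mx mul0mx addr0; congr col_mx.
  apply/matrixP => i j; rewrite (ord1 j) !mxE big_ord1 !mxE.
  have := hx (rshift 1 i) => hxi.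
  have e0 : x (lshift n ord0) 0 = x0 by [].
  rewrite e0; field; by rewrite hxi x00.
have yB : y *m Bmx nu = row_mx (lsubmx y) 0.
  rewrite -[y in LHS]hsubmxK /Bmx mul_row_block.
  rewrite [_ *m 1]mulmx1 [_ *m 1]mulmx1 mulmx0 addr0; congr row_mx.
  apply/matrixP => i j; rewrite (ord1 i) !mxE big_ord1 !mxE.
  have := hy (rshift 1 j) => hyj.
  have e0 : y 0 (lshift n ord0) = y0 by [].
  rewrite e0; field; by rewrite hyj y00.
set M' := invmx (Bmx nu) *m M *m invmx (Amx lam).
have hM'x : M' *m col_mx (usubmx x) 0 = 0.
  by rewrite -Ax /M' -mulmxA mulKmx // -mulmxA hMx mulmx0.
have hyM' : row_mx (lsubmx y) 0 *m M' = 0.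
  by rewrite -yB /M' !mulmxA mulmxK // hyM !mul0mx.
have eM' := submxK M'.
rewrite -eM' mul_block_col !mulmx0 !addr0 in hM'x.
rewrite -eM' mul_row_block !mul0mx !addr0 in hyM'.
move/eqP: hM'x; rewrite col_mx_eq0 => /andP[/eqP h1 /eqP h2].
move/eqP: hyM'; rewrite row_mx_eq0 => /andP[_ /eqP h3].
have xu0 : usubmx x 0 0 != 0 by rewrite mxE.
have yl0 : lsubmx y 0 0 != 0 by rewrite mxE.
have e1 := col1_eq0 xu0 h1; have e2 := col1_eq0 xu0 h2; have e3 := row1_eq0 yl0 h3.
set N := drsubmx M'.
have eMM : M = Bmx nu *m block_mx 0 0 0 N *m Amx lam.
  by rewrite -e1 -e2 -e3 eM' /M' !mulmxA mulmxV // mul1mx mulmxKV.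
have rN : \rank N = n.
  by move: hr; rewrite eMM rank_unit_both // rank_diag_block_mx mxrank0.
have uN : N \in unitmx by rewrite -row_free_unit /row_free rN.
set v' := invmx N.
have uv : v' \in unitmx by rewrite unitmx_inv.
have [k [l hkl]] : exists k l, v' k l != 0.
  case: (boolP [exists k, exists l, v' k l != 0]).
    by case/existsP => k /existsP [l h]; exists k, l.
  rewrite negb_exists => /forallP hall.
  have v0 : v' = 0.
    apply/matrixP => i j; have := hall i; rewrite negb_exists => /forallP /(_ j).
    by rewrite negbK mxE => /eqP.
  by move: (mxrank_unit uv); rewrite v0 mxrank0 => h0; move: hn; rewrite -h0.
pose w0 : 'M[C]_n := \matrix_(j, k) (- v' j k * (lam j 0 ^+ 2 * nu k 0 ^+ 2)).
set c := w0 k l.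
have c0 : c != 0.
  by rewrite /c mxE mulf_neq0 ?oppr_eq0 // mulf_neq0 // expf_neq0.
exists lam, nu, (c^-1 *: w0).
have hvp : vprime lam nu (c^-1 *: w0) = c^-1 *: v'.
  apply/matrixP => i j; rewrite !mxE.
  have := hl i; have := hnu j => hh1 hh2.
  by field; rewrite c0 hy hx y00 x00.
have g : generic_R1_point lam nu (c^-1 *: w0).
  split; first by exists k, l; rewrite mxE -/c mulVf.
  split => //; split => //.
  by rewrite hvp unitmxZ // unitfE invr_eq0.
have [hK hL] := part1 g.
split => //; split => //.
have hF : KZ1_formula lam nu (c^-1 *: w0) = c *: M.
  rewrite /KZ1_formula hvp invmxZ; last by rewrite unitmxZ // unitfE invr_eq0.
  rewrite invrK /v' invmxK eMM.
  have -> : block_mx (0 : 'M[C]_1) 0 0 (c *: N) = c *: block_mx 0 0 0 N.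
    by rewrite scale_block_mx !scaler0.
  by rewrite -scalemxAr -scalemxAl.
split.
  apply/eqP => h; move: hr; rewrite h mxrank0 => h0; move: hn; by rewrite -h0.
exists (fun s => c^-1 * s).
have h := limmx_scale (c^-1) hL.
rewrite hF scalerA mulVf // scale1r in h.
apply: limmx_unif => i j; apply: lim0_eq (h i j) => s.
by rewrite scalerA.
Qed.

End P3.


Unset Implicit Arguments.

Theorem proposition2p1 (R : realType) (n : nat) (hn : (1 <= n)%N) :
  (* the formula, and the image lies in R_{q-1} (rank exactly q-1) *)
  (forall (lam nu : 'cV[R[i]]_n) (w : 'M[R[i]]_n),
     generic_R1_point lam nu w ->
     KZ1_value lam nu w (KZ1_formula lam nu w)
     /\ \rank (KZ1_formula lam nu w) = n)
  /\
  (* every M in R_{q-1} of rank q-1 whose kernel and left kernel are spanned by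
     vectors with all entries nonzero (a dense open subset of R_{q-1}) is
     K_{Z_1} of a point of R^1 *)
  (forall M : 'M[R[i]]_(1 + n),
     \rank M = n ->
     (exists2 x : 'cV[R[i]]_(1 + n), (forall j, x j 0 != 0) & M *m x = 0) ->
     (exists2 y : 'rV[R[i]]_(1 + n), (forall j, y 0 j != 0) & y *m M = 0) ->
     exists (lam nu : 'cV[R[i]]_n) (w : 'M[R[i]]_n),
       generic_R1_point lam nu w /\ KZ1_value lam nu w M).
Proof.
split.
  move=> lam nu w g; have [hK hL] := part1 g.
  have hr := formula_rank g.
  split => //; split => //; split.
    apply/eqP => h; move: hr; rewrite h mxrank0 => h0; move: hn; by rewrite -h0.
  exists (fun s => s); exact: limmx_unif hL.
move=> M hr hx hy; by apply: part2.
Qed.
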